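(* Consider the multicast coalitional game with player set $\mathcal{N}$ and value function $$v(S)=\sum_{i\in S}U_i-\sum_{i\in S}\frac{\alpha_i}{R_S}-\frac{\beta+\gamma}{R_S},\qquad R_S=\min_{i\in S}R_i,$$ for nonempty $S\subseteq\mathcal{N}$, with the convention $v(\emptyset)=0$. Let $\mathbf{P}=\{P_1,\dots,P_n\}$ be a partition of $\mathcal{N}$ into nonempty sets, with $R_{i,min}$, $R_{i,max}$ the minimum and maximum rates of users in $P_i$, ordered as $R_{1,min}\le R_{1,max}\le R_{2,min}\le\dots\le R_{n,min}\le R_{n,max}$. Let $\alpha_{min}=\min_{i\in\mathcal{N}}\alpha_i$. If $$\frac{R_{i+1,min}}{R_{i,max}}\ge\frac{\alpha_{min}+\beta+\gamma}{\alpha_{min}}\quad\forall i\in\{1,\dots,n-1\},$$ then for every $\mathbf{P}$-incompatible coalition $S$ (i.e. nonempty $S\subseteq\mathcal{N}$ with $S\not\subseteq P_i$ for all $i$), $$\sum_{i=1}^nv(S\cap P_i)\ge v(S).$$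
   Context: A transmitter multicasts a file of size $X>0$ bits to users $\mathcal{N}=\{1,\dots,N\}$. User $i$ has valuation $U_i\in\mathbb{R}$, downloads at rate $R_i>0$, and consumes receive power $P_{Rx,i}>0$; the transmitter transmits at power $P_{Tx}>0$. Costs per unit energy are $a>0$ at users and $b>0$ at the transmitter; bandwidth cost per second is $w>0$. Set $\alpha_i=aP_{Rx,i}X$, $\beta=bP_{Tx}X$, $\gamma=wX$. *)

(* Defs.v *)
From mathcomp Require Import all_boot all_order all_algebra.
Set Implicit Arguments. Unset Strict Implicit. Unset Printing Implicit Defensive.
Import Order.TTheory GRing.Theory Num.Theory.
Local Open Scope ring_scope.

Section Multicast.
Variables (K : realFieldType) (T : finType).

(* minimum / maximum of f over a set S (0 on the empty set, never used there) *)
Definition minf (f : T -> K) (S : {set T}) : K :=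
  match [pick i in S] with
  | Some i0 => \big[Num.min/f i0]_(j in S) f j
  | None => 0
  end.

Definition maxf (f : T -> K) (S : {set T}) : K :=
  match [pick i in S] with
  | Some i0 => \big[Num.max/f i0]_(j in S) f j
  | None => 0
  end.

Definition mc_value (U Rt alpha : T -> K) (beta gamma : K) (S : {set T}) : K :=
  if S == set0 then 0
  else \sum_(i in S) U i - \sum_(i in S) alpha i / minf Rt S
       - (beta + gamma) / minf Rt S.

End Multicast.

(* Main.v *)
Require Import Defs.
From mathcomp Require Import all_boot all_order all_algebra.
From mathcomp Require Import lra.
Import Order.TTheory GRing.Theory Num.Theory.
Local Open Scope ring_scope.

Set Implicit Arguments.
Section Helpers.
Variables (K : realFieldType) (T : finType).

Lemma minf_le (f : T -> K) (S : {set T}) i : i \in S -> minf f S <= f i.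
Proof.
move=> iS; rewrite /minf; case: pickP => [i0 _|H]; last by rewrite H in iS.
exact: bigmin_le_cond.
Qed.

Lemma maxf_ge (f : T -> K) (S : {set T}) i : i \in S -> f i <= maxf f S.
Proof.
move=> iS; rewrite /maxf; case: pickP => [i0 _|H]; last by rewrite H in iS.
exact: le_bigmax_cond.
Qed.

Lemma minf_mem (f : T -> K) (S : {set T}) : S != set0 -> exists2 i, i \in S & minf f S = f i.
Proof.
move=> /set0Pn [j jS]; rewrite /minf; case: pickP => [i0 i0S|H]; last by rewrite H in jS.
apply: (big_ind (fun x => exists2 i, i \in S & x = f i)).
- by exists i0.
- move=> x y [i iS ->] [k kS ->].
  have [h|h] := leP (f i) (f k).
  + by exists i => //; rewrite min_l.
  + by exists k => //; rewrite min_r // ltW.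
- by move=> i iS; exists i.
Qed.

Lemma maxf_mem (f : T -> K) (S : {set T}) : S != set0 -> exists2 i, i \in S & maxf f S = f i.
Proof.
move=> /set0Pn [j jS]; rewrite /maxf; case: pickP => [i0 i0S|H]; last by rewrite H in jS.
apply: (big_ind (fun x => exists2 i, i \in S & x = f i)).
- by exists i0.
- move=> x y [i iS ->] [k kS ->].
  have [h|h] := leP (f i) (f k).
  + by exists k => //; rewrite max_r.
  + by exists i => //; rewrite max_l // ltW.
- by move=> i iS; exists i.
Qed.

Lemma minf_ge (f : T -> K) (S : {set T}) m : S != set0 -> (forall i, i \in S -> m <= f i) ->
  m <= minf f S.
Proof. by move=> /(minf_mem f) [i iS ->] H; apply: H. Qed.

Lemma key (A c am R r : K) : 0 < am -> am <= A -> 0 < c -> 0 < R ->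
  (am + c) / am * R <= r -> A / r + c / r <= A / R.
Proof.
move=> ham hA hc hR hr.
set q := (am + c) / am in hr.
have hq : q * am = am + c by rewrite /q divfK // gt_eqF.
have q0 : 0 < q by rewrite /q divr_gt0 // addr_gt0.
have r0 : 0 < r by apply: lt_le_trans hr; rewrite mulr_gt0.
have A0 : 0 < A by apply: lt_le_trans hA.
rewrite -mulrDl ler_pdivrMr // mulrAC ler_pdivlMr //.
have h1 : A * (q * R) <= A * r by rewrite ler_pM2l.
have h2 : (A + c) <= A * q.
  rewrite -(ler_pM2r ham) -mulrA hq; nra.
have h3 : (A + c) * R <= A * q * R by rewrite ler_pM2r.
rewrite mulrA in h1; lra.
Qed.

End Helpers.
Arguments minf_le {K T} f {S i}. Arguments maxf_ge {K T} f {S i}. Arguments minf_mem {K T} f {S}. Arguments maxf_mem {K T} f {S}. Arguments minf_ge {K T}. Arguments key {K A c am R r}.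

Theorem lemma1 (K : realFieldType) (T : finType)
  (U Rt PRx : T -> K) (PTx a b w X : K)
  (hX : 0 < X) (ha : 0 < a) (hb : 0 < b) (hw : 0 < w) (hPTx : 0 < PTx)
  (hR : forall i, 0 < Rt i) (hPRx : forall i, 0 < PRx i)
  (n : nat) (P : 'I_n -> {set T})
  (hPne : forall k, P k != set0)
  (hPdisj : forall k l, k != l -> [disjoint P k & P l])
  (hPcov : \bigcup_(k < n) P k = [set: T])
  (hPord : forall k l : 'I_n, nat_of_ord l = (nat_of_ord k).+1 ->
             maxf Rt (P k) <= minf Rt (P l))
  (hcond : forall k l : 'I_n, nat_of_ord l = (nat_of_ord k).+1 ->
      minf Rt (P l) / maxf Rt (P k) >=
        (minf (fun i => a * PRx i * X) [set: T] + b * PTx * X + w * X)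
          / minf (fun i => a * PRx i * X) [set: T])
  (S : {set T}) (hS0 : S != set0) (hSinc : forall k, ~~ (S \subset P k)) :
  \sum_(k < n) mc_value U Rt (fun i => a * PRx i * X) (b * PTx * X) (w * X) (S :&: P k)
    >= mc_value U Rt (fun i => a * PRx i * X) (b * PTx * X) (w * X) S.
Proof.
set al := fun i => a * PRx i * X.
set bb := b * PTx * X. set gg := w * X.
set am := minf al [set: T].
have alpos : forall i, 0 < al i by move=> i; rewrite /al !mulr_gt0.
have Tne : [set: T] != set0.
  have [i _] := set0Pn _ hS0; apply/set0Pn; exists i; exact: in_setT.
have ampos : 0 < am by rewrite /am; have [i _ ->] := minf_mem al Tne.
have amle : forall i, am <= al i by move=> i; apply: minf_le; rewrite in_setT.
have c0 : 0 < bb + gg by rewrite addr_gt0 // /bb /gg !mulr_gt0.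
set rho := (am + bb + gg) / am.
have rho1 : forall x, 0 < x -> x < rho * x.
  move=> x x0; rewrite ltr_pMl // /rho ltr_pdivlMr // mul1r -addrA ltrDl //.
have rho0 : 0 < rho by rewrite /rho divr_gt0 // -addrA addr_gt0.
have maxpos : forall k, 0 < maxf Rt (P k) by move=> k; have [i _ ->] := maxf_mem Rt (hPne k).
have minmax : forall k, minf Rt (P k) <= maxf Rt (P k).
  by move=> k; have [i iP ->] := minf_mem Rt (hPne k); apply: maxf_ge.
have chain : forall d (k l : 'I_n), nat_of_ord l = (k + d.+1)%N ->
    rho * maxf Rt (P k) <= minf Rt (P l).
  elim=> [|d IH] k l hl.
    move: hl; rewrite addn1 => hl; have := hcond k l hl.
    by rewrite ler_pdivlMr // mulrC.
  have hm : (l.-1 < n)%N by apply: leq_ltn_trans (leq_pred l) (ltn_ord l).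
  set m := Ordinal hm.
  have := IH k m; rewrite /= hl addnS /= => /(_ erefl) h1.
  apply: (le_trans h1); apply: (le_trans (minmax m)); apply: hPord.
  by rewrite /= hl addnS.
have uniqP : forall i k l, i \in P k -> i \in P l -> k = l.
  move=> i k l ik il; case: (eqVneq k l) => // /hPdisj /disjointFr /(_ ik).
  by rewrite il.
have coverP : forall i, exists k, i \in P k.
  move=> i; have : i \in [set: T] by rewrite in_setT.
  by rewrite -hPcov => /bigcupP [k _ ik]; exists k.
have part : forall F : T -> K,
    \sum_(i in S) F i = \sum_(k < n) \sum_(i in S :&: P k) F i.
  move=> F.
  transitivity (\sum_(i in S) \sum_(k < n) (if i \in P k then F i else 0)).
    apply: eq_bigr => i iS; have [ki iki] := coverP i.
    rewrite (bigD1 ki) //= iki big1 ?addr0 // => k kne.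
    case: ifP => // ik; by rewrite (uniqP _ _ _ ik iki) eqxx in kne.
  rewrite exchange_big; apply: eq_bigr => k _.
  rewrite big_mkcond [RHS]big_mkcond; apply: eq_bigr => i _.
  by rewrite inE; case: (i \in S); case: (i \in P k).
have [i0 i0S Ri0] := minf_mem Rt hS0.
have [k0 i0k0] := coverP i0.
set R := minf Rt S.
move: Ri0; rewrite -/R => Ri0.
have R0 : 0 < R by rewrite Ri0.
have Rk0 : minf Rt (S :&: P k0) = R.
  apply/le_anti/andP; split.
    by rewrite Ri0; apply: minf_le; rewrite inE i0S.
  apply: minf_ge; first by apply/set0Pn; exists i0; rewrite inE i0S.
  by move=> i; rewrite inE => /andP [iS _]; apply: minf_le.
have far : forall k, k != k0 -> S :&: P k != set0 -> rho * R <= minf Rt (S :&: P k).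
  move=> k kne ne; have [j] := set0Pn _ ne; rewrite inE => /andP [jS jk].
  case: (ltngtP k k0) => hk.
  - exfalso.
    have e : nat_of_ord k0 = (k + (k0 - k.+1).+1)%N by rewrite subnSK // subnKC // ltnW.
    have h := chain _ k k0 e.
    have h2 : minf Rt (P k0) <= maxf Rt (P k).
      apply: (le_trans (minf_le _ i0k0)); rewrite -Ri0.
      apply: (le_trans (minf_le _ jS)); exact: maxf_ge.
    have := rho1 _ (maxpos k); rewrite ltNge => /negP; apply.
    exact: (le_trans h).
  - have e : nat_of_ord k = (k0 + (k - k0.+1).+1)%N by rewrite subnSK // subnKC // ltnW.
    have h := chain _ k0 k e.
    apply: (le_trans _ (le_trans h _)).
      by rewrite ler_pM2l // Ri0; apply: maxf_ge.
    apply: minf_ge => // i; rewrite inE => /andP [_ ik]; exact: minf_le.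
  - by exfalso; move: kne; rewrite (val_inj hk) eqxx.
rewrite /mc_value (negbTE hS0) -/R.
rewrite (part U) (part (fun i => al i / R)) -sumrB.
rewrite [X in X - _ <= _](bigD1 k0) // [X in _ <= X](bigD1 k0) //=.
have ne0 : S :&: P k0 != set0 by apply/set0Pn; exists i0; rewrite inE i0S.
rewrite (negbTE ne0) Rk0 addrAC lerD2l.
apply: ler_sum => k kne.
case: ifP => [/eqP -> | /negbT ne]; first by rewrite !big_set0 subrr.
have [j] := set0Pn _ ne => jSk.
set A := \sum_(i in S :&: P k) al i.
have hA : am <= A.
  rewrite /A (bigD1 j) //=; have := amle j.
  have : 0 <= \sum_(i in S :&: P k | i != j) al i by apply: sumr_ge0 => i _; apply: ltW.
  lra.
have far' : (am + (bb + gg)) / am * R <= minf Rt (S :&: P k) by rewrite addrA; exact: far.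
have := key ampos hA c0 R0 far'.
have e1 : forall x, \sum_(i in S :&: P k) al i / x = A / x by move=> x; rewrite /A mulr_suml.
rewrite !e1.
lra.
Qed.
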